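(* Let $\psi=\begin{bmatrix}\psi_R\\ \psi_I\end{bmatrix}$ with arbitrary $\psi_R,\psi_I\in\mathbb{R}^{N}$, $N=(n_x+1)(n_y+1)(n_z+1)$. For each $1\le i\le n_x$, $1\le j\le n_y$, $1\le k\le n_z$, let $\mathbf{P}_{ijk}$ be the $16\times16$ matrix $\mathbf{P}$ defined (as in the context) for the single-cell region $n_x=n_y=n_z=1$ formed by the primary cell with corners $(i,j,k)$ and $(i+1,j+1,k+1)$, with the same $\hbar,m,\Delta x,\Delta y,\Delta z,\Delta t$ and with potential values $U_{i+a,j+b,k+c}$ ($a,b,c\in\{0,1\}$) at its local node $(a+1,b+1,c+1)$; and let $\psi_{ijk}\in\mathbb{R}^{16}$ be the vector formed by the entries of $\psi_R$ and then of $\psi_I$ at the eight corner nodes of that cell, ordered by the local node ordering. Then $$\psi^T\mathbf{P}\psi=\sum_{i=1}^{n_x}\sum_{j=1}^{n_y}\sum_{k=1}^{n_z}\psi_{ijk}^T\mathbf{P}_{ijk}\psi_{ijk}.$$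
   Context: Fix constants $\hbar>0$, $m>0$, cell sizes $\Delta x,\Delta y,\Delta z>0$, a time step $\Delta t>0$ and positive integers $n_x,n_y,n_z$. A region is a box of $n_x\times n_y\times n_z$ primary cells of size $\Delta x\times\Delta y\times\Delta z$ with primary nodes $(i,j,k)$, $1\le i\le n_x+1$, $1\le j\le n_y+1$, $1\le k\le n_z+1$. Let $N=(n_x+1)(n_y+1)(n_z+1)$; node-indexed vectors use the ordering $i+(j-1)(n_x+1)+(k-1)(n_x+1)(n_y+1)$. Real potential values $U_{i,j,k}$ are given at the nodes; $D_U$ is the $N\times N$ diagonal matrix containing them. Let $I_p$ be the $p\times p$ identity, $\tilde I_p=\mathrm{diag}(\tfrac12,1,\dots,1,\tfrac12)$ ($p\times p$; for $p=2$, $\tilde I_2=\tfrac12 I_2$), $W_p=[0_{p\times1}\ I_p]-[I_p\ 0_{p\times 1}]$ ($p\times(p+1)$), $\otimes$ the Kronecker product. For a region define $D_V''=\Delta x\Delta y\Delta z\,\tilde I_{n_z+1}\otimes\tilde I_{n_y+1}\otimes\tilde I_{n_x+1}$; $D=[D_x\ D_y\ D_z]$ with $D_x=-I_{n_z+1}\otimes I_{n_y+1}\otimes W_{n_x}^T$, $D_y=-I_{n_z+1}\otimes W_{n_y}^T\otimes I_{n_x+1}$, $D_z=-W_{n_z}^T\otimes I_{n_y+1}\otimes I_{n_x+1}$; $D_S''=\mathrm{diag}(\Delta y\Delta z\,\tilde I_{n_z+1}\otimes\tilde I_{n_y+1}\otimes I_{n_x},\ \Delta x\Delta z\,\tilde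 I_{n_z+1}\otimes I_{n_y}\otimes\tilde I_{n_x+1},\ \Delta x\Delta y\,I_{n_z}\otimes\tilde I_{n_y+1}\otimes\tilde I_{n_x+1})$; $D_l'=\mathrm{diag}(\Delta x\, I_{n_x(n_y+1)(n_z+1)},\ \Delta y\, I_{(n_x+1)n_y(n_z+1)},\ \Delta z\, I_{(n_x+1)(n_y+1)n_z})$; $H=\frac{\hbar^2}{2m}D D_S''(D_l')^{-1}D^T+D_V''D_U$; $\mathbf{P}=\begin{bmatrix}D_V''&-\frac{\Delta t}{2\hbar}H\\-\frac{\Delta t}{2\hbar}H&D_V''\end{bmatrix}$. *)

(* Defs.v *)
(* Kronecker product: tensmx (notation A *t B) from
   mathcomp-real-closed's mxtens.v, with row index of A *t B equal to
   i_A * rows(B) + i_B (rightmost factor varies fastest). *)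
From HB Require Import structures.
From mathcomp Require Import all_boot all_order all_algebra.
From mathcomp Require Import mxtens zify.
Set Implicit Arguments. Unset Strict Implicit. Unset Printing Implicit Defensive.
Import Order.TTheory GRing.Theory Num.Theory.
Local Open Scope ring_scope.

Section Defs.
Variable R : realFieldType.

Definition Nn (nx ny nz : nat) : nat := (nz.+1 * (ny.+1 * nx.+1))%N.

(* 0-based node (i,j,k) -> 0-based position i + j(nx+1) + k(nx+1)(ny+1)
   (the paper's ordering i+(j-1)(nx+1)+(k-1)(nx+1)(ny+1), 1-based) *)
Definition node {nx ny nz : nat} (i : 'I_nx.+1) (j : 'I_ny.+1) (k : 'I_nz.+1)
  : 'I_(Nn nx ny nz) := mxtens_index (k, mxtens_index (j, i)).

Definition node_x {nx ny nz} (p : 'I_(Nn nx ny nz)) : 'I_nx.+1 :=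
  (mxtens_unindex (mxtens_unindex p).2).2.
Definition node_y {nx ny nz} (p : 'I_(Nn nx ny nz)) : 'I_ny.+1 :=
  (mxtens_unindex (mxtens_unindex p).2).1.
Definition node_z {nx ny nz} (p : 'I_(Nn nx ny nz)) : 'I_nz.+1 :=
  (mxtens_unindex p).1.

(* W_p = [0_{p x 1} I_p] - [I_p 0_{p x 1}], written entrywise (0-based) *)
Definition Wm (p : nat) : 'M[R]_(p, p.+1) :=
  \matrix_(i < p, j < p.+1) (((j : nat) == i.+1)%:R - ((j : nat) == i)%:R).

Definition Itil (p : nat) : 'M[R]_p :=
  diag_mx (\row_(i < p) (if ((i : nat) == 0%N) || ((i : nat) == p.-1)
                          then 2^-1 else 1)).

Section Region.
Variables (hbar m dx dy dz dt : R) (nx ny nz : nat).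
Variable U : 'I_nx.+1 -> 'I_ny.+1 -> 'I_nz.+1 -> R.

Definition DV : 'M[R]_(Nn nx ny nz) :=
  (dx * dy * dz) *: (Itil nz.+1 *t (Itil ny.+1 *t Itil nx.+1)).

Definition DU : 'M[R]_(Nn nx ny nz) :=
  diag_mx (\row_p U (node_x p) (node_y p) (node_z p)).

Definition Dxm := - ((1%:M : 'M[R]_nz.+1) *t ((1%:M : 'M[R]_ny.+1) *t (Wm nx)^T)).
Definition Dym := - ((1%:M : 'M[R]_nz.+1) *t ((Wm ny)^T *t (1%:M : 'M[R]_nx.+1))).
Definition Dzm := - ((Wm nz)^T *t ((1%:M : 'M[R]_ny.+1) *t (1%:M : 'M[R]_nx.+1))).

Definition Dm := row_mx Dxm (row_mx Dym Dzm).

Definition DS :=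
  block_mx ((dy * dz) *: (Itil nz.+1 *t (Itil ny.+1 *t (1%:M : 'M[R]_nx)))) 0 0
  (block_mx ((dx * dz) *: (Itil nz.+1 *t ((1%:M : 'M[R]_ny) *t Itil nx.+1))) 0 0
            ((dx * dy) *: ((1%:M : 'M[R]_nz) *t (Itil ny.+1 *t Itil nx.+1)))).

Definition Dl :=
  block_mx (dx%:M : 'M[R]_(nz.+1 * (ny.+1 * nx))) 0 0
  (block_mx (dy%:M : 'M[R]_(nz.+1 * (ny * nx.+1))) 0 0
            (dz%:M : 'M[R]_(nz * (ny.+1 * nx.+1)))).

Definition Hm : 'M[R]_(Nn nx ny nz) :=
  (hbar ^+ 2 / (2 * m)) *: (Dm *m DS *m invmx Dl *m Dm^T) + DV *m DU.

Definition Pm : 'M[R]_(Nn nx ny nz + Nn nx ny nz) :=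
  block_mx DV (- (dt / (2 * hbar)) *: Hm) (- (dt / (2 * hbar)) *: Hm) DV.
End Region.

Lemma shift_ord_proof (n : nat) (i : 'I_n) (a : 'I_2) : (i + a < n.+1)%N.
Proof. case: i a => i Hi [a Ha] /=; rewrite ltnS; case: a Ha => [|[|]] //= _; lia. Qed.
Definition shift_ord (n : nat) (i : 'I_n) (a : 'I_2) : 'I_n.+1 :=
  Ordinal (shift_ord_proof i a).

Definition psi_cell {nx ny nz : nat} (psiR psiI : 'cV[R]_(Nn nx ny nz))
  (i : 'I_nx) (j : 'I_ny) (k : 'I_nz) : 'cV[R]_(Nn 1 1 1 + Nn 1 1 1) :=
  let loc (v : 'cV[R]_(Nn nx ny nz)) : 'cV[R]_(Nn 1 1 1) :=
    \col_(q < Nn 1 1 1)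
      v (node (shift_ord i (node_x q)) (shift_ord j (node_y q))
              (shift_ord k (node_z q))) 0 in
  col_mx (loc psiR) (loc psiI).

Definition U_cell {nx ny nz : nat} (U : 'I_nx.+1 -> 'I_ny.+1 -> 'I_nz.+1 -> R)
  (i : 'I_nx) (j : 'I_ny) (k : 'I_nz) : 'I_2 -> 'I_2 -> 'I_2 -> R :=
  fun a b c => U (shift_ord i a) (shift_ord j b) (shift_ord k c).
End Defs.

(* Main.v *)
Require Import Defs.
From HB Require Import structures.
From mathcomp Require Import all_boot all_order all_algebra.
From mathcomp Require Import mxtens ring.
Import Order.TTheory GRing.Theory Num.Theory.
Local Open Scope ring_scope.

Section Proof.
Variable R : realFieldType.

Definition form {n} (M : 'M[R]_n) (u v : 'cV[R]_n) : R := (u^T *m M *m v) 0 0.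

Lemma mxE_add m n (A B : 'M[R]_(m,n)) i j : (A + B) i j = A i j + B i j.
Proof. by rewrite mxE. Qed.
Lemma mxE_scale m n a (A : 'M[R]_(m,n)) i j : (a *: A) i j = a * A i j.
Proof. by rewrite mxE. Qed.

Lemma formD n (M N : 'M[R]_n) u v : form (M + N) u v = form M u v + form N u v.
Proof. by rewrite /form mulmxDr mulmxDl mxE. Qed.
Lemma formZ n a (M : 'M[R]_n) u v : form (a *: M) u v = a * form M u v.
Proof. by rewrite /form -scalemxAr -scalemxAl mxE. Qed.
Lemma formM n (M N : 'M[R]_n) u v : form (M *m N) u v = form M u (N *m v).
Proof. by rewrite /form !mulmxA. Qed.

Lemma Pm_form hbar m dx dy dz dt nx ny nz U (a b : 'cV[R]_(Nn nx ny nz)) :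
  form (Pm hbar m dx dy dz dt U) (col_mx a b) (col_mx a b) =
  form (DV dx dy dz nx ny nz) a a + form (DV dx dy dz nx ny nz) b b
  - (dt / (2 * hbar)) * (form (Hm hbar m dx dy dz U) a b + form (Hm hbar m dx dy dz U) b a).
Proof.
rewrite /form /Pm tr_col_mx mul_row_block mul_row_col !mulmxDl !mxE_add.
rewrite -!scalemxAr -!scalemxAl !mxE_scale; ring.
Qed.

Definition WtW n : 'M[R]_n.+1 := (Wm R n)^T *m Wm R n.

Lemma scalar_unit n (a : R) : a != 0 -> (a%:M : 'M[R]_n) \in unitmx.
Proof. by move=> a0; rewrite unitmxE det_scalar unitrX // unitfE. Qed.

Lemma kin dx dy dz nx ny nz : dx != 0 -> dy != 0 -> dz != 0 ->
  Dm R nx ny nz *m DS dx dy dz nx ny nz *m invmx (Dl dx dy dz nx ny nz) *m (Dm R nx ny nz)^T =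
  (dy * dz / dx) *: (Itil R nz.+1 *t (Itil R ny.+1 *t WtW nx))
  + (dx * dz / dy) *: (Itil R nz.+1 *t (WtW ny *t Itil R nx.+1))
  + (dx * dy / dz) *: (WtW nz *t (Itil R ny.+1 *t Itil R nx.+1)).
Proof.
move=> hx hy hz.
rewrite /Dl invmx_block_diag; last first.
  by rewrite !block_diag_mx_unit !scalar_unit.
rewrite invmx_block_diag; last by rewrite !block_diag_mx_unit !scalar_unit.
rewrite !invmx_scalar /DS /Dm.
rewrite !mul_row_block !(mulmx0, mul0mx, addr0, add0r).
rewrite !mul_row_block !(mulmx0, mul0mx, addr0, add0r).

rewrite !tr_row_mx !mul_row_col !mul_mx_scalar /Dxm /Dym /Dzm.
rewrite -!scalemxAr -!scalemxAl !scalerA.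
rewrite !linearN /= !mulNmx !scalerN !opprK.
rewrite !trmx_tens !trmx1 !trmxK !tensmx_mul.
rewrite !mul1mx !mulmx1 addrA /WtW.
by rewrite [dx^-1 * _]mulrC [dy^-1 * _]mulrC [dz^-1 * _]mulrC.
Qed.

Lemma H_form hbar m dx dy dz nx ny nz (U : 'I_nx.+1 -> 'I_ny.+1 -> 'I_nz.+1 -> R) u v :
  dx != 0 -> dy != 0 -> dz != 0 ->
  form (Hm hbar m dx dy dz U) u v =
  hbar ^+ 2 / (2 * m) *
    ((dy * dz / dx) * form (Itil R nz.+1 *t (Itil R ny.+1 *t WtW nx)) u v
   + (dx * dz / dy) * form (Itil R nz.+1 *t (WtW ny *t Itil R nx.+1)) u v
   + (dx * dy / dz) * form (WtW nz *t (Itil R ny.+1 *t Itil R nx.+1)) u v)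
  + dx * dy * dz * form (Itil R nz.+1 *t (Itil R ny.+1 *t Itil R nx.+1)) u (DU U *m v).
Proof.
move=> hx hy hz.
by rewrite /Hm kin // formD !formZ !formD !formZ /DV -scalemxAl formZ formM.
Qed.

Lemma sum_tens m n (F : 'I_(m * n) -> R) :
  \sum_p F p = \sum_(i < m) \sum_(j < n) F (mxtens_index (i, j)).
Proof.
rewrite pair_big /=; apply: reindex => //=.
by exists (@mxtens_unindex m n) => i _; rewrite (mxtens_indexK, mxtens_unindexK) //; case: i.
Qed.

Lemma sum_node nx ny nz (F : 'I_(Nn nx ny nz) -> R) :
  \sum_p F p = \sum_(z < nz.+1) \sum_(y < ny.+1) \sum_(x < nx.+1) F (node x y z).
Proof. rewrite sum_tens; apply: eq_bigr => z _; by rewrite sum_tens. Qed.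

Definition N3 {a b c} (A : 'M[R]_c) (B : 'M[R]_b) (C : 'M[R]_a)
  (F : 'I_a -> 'I_a -> 'I_b -> 'I_b -> 'I_c -> 'I_c -> R) : R :=
  \sum_z \sum_z' A z z' * (\sum_y \sum_y' B y y' *
     (\sum_x \sum_x' C x x' * F x x' y y' z z')).

Lemma tens_form nx ny nz (A : 'M[R]_nz.+1) (B : 'M[R]_ny.+1) (C : 'M[R]_nx.+1)
  (f g : 'cV[R]_(Nn nx ny nz)) :
  form (A *t (B *t C)) f g =
  N3 A B C (fun x x' y y' z z' => f (node x y z) 0 * g (node x' y' z') 0).
Proof.
rewrite /form mxE.
under eq_bigr do rewrite mxE big_distrl /=.
rewrite exchange_big /= sum_node /N3.
apply: eq_bigr => z _.
under eq_bigr => y _ do under eq_bigr => x _ do rewrite sum_node.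
under eq_bigr => y _ do rewrite exchange_big.
rewrite exchange_big; apply: eq_bigr => z' _.
rewrite mulr_sumr; apply: eq_bigr => y _.
rewrite exchange_big mulr_sumr; apply: eq_bigr => y' _.
rewrite !mulr_sumr; apply: eq_bigr => x _.
rewrite !mulr_sumr; apply: eq_bigr => x' _.
rewrite /node !tensmxE !mxE; ring.
Qed.

End Proof.
Section P2. Variable R : realFieldType.
Local Notation WtW := (WtW R).
Local Notation form := (form R).
Local Notation N3 := (N3 R).
Lemma sum_delta N (k : nat) (h : nat -> R) : (k < N)%N ->
  \sum_(x < N) ((x : nat) == k)%:R * h x = h k.
Proof.
move=> hk. rewrite (bigD1 (Ordinal hk)) //= eqxx mul1r.
rewrite big1 ?addr0 // => x hx.
have -> : ((x : nat) == k) = false.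
  apply/negbTE; apply: contra hx => /eqP e. by apply/eqP/val_inj.
by rewrite mul0r.
Qed.
Lemma W_sum n (e : 'I_n) (h : nat -> R) :
  \sum_(x < n.+1) (((x : nat) == e.+1)%:R - ((x : nat) == e)%:R) * h x = h e.+1 - h e.
Proof.
under eq_bigr do rewrite mulrBl.
rewrite sumrB. rewrite (@sum_delta _ e.+1); last by rewrite ltnS.
by rewrite sum_delta // ltnW // ltnS.
Qed.
Lemma WtW_sum n (g : nat -> nat -> R) :
  \sum_(x < n.+1) \sum_(x' < n.+1) WtW n x x' * g x x' =
  \sum_(e < n) (g e.+1 e.+1 - g e.+1 e - g e e.+1 + g e e).
Proof.
under eq_bigr do under eq_bigr do rewrite mxE big_distrl /=.
under eq_bigr do rewrite exchange_big.
rewrite exchange_big; apply: eq_bigr => e _ /=.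
under eq_bigr do under eq_bigr do rewrite !mxE -mulrA.
under eq_bigr do rewrite -mulr_sumr W_sum.
rewrite (W_sum _ e (fun x => g x e.+1 - g x e)).
ring.
Qed.
Lemma sum_delta2 N (x : 'I_N) (a : R) (h : 'I_N -> R) :
  \sum_(y < N) (a *+ (x == y)) * h y = a * h x.
Proof.
rewrite (bigD1 x) //= eqxx mulr1n big1 ?addr0 // => y hy.
by rewrite eq_sym (negbTE hy) mulr0n mul0r.
Qed.

Lemma trap n (G : nat -> R) : (0 < n)%N ->
  \sum_(x < n.+1) (if ((x : nat) == 0%N) || ((x : nat) == n) then 2^-1 else 1) * G x =
  \sum_(i < n) (G i + G i.+1) / 2.
Proof.
case: n => // n _.
rewrite big_ord_recl big_ord_recr /= /bump !add1n eqxx.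
under eq_bigr => i _ do rewrite eqSS (ltn_eqF (ltn_ord i)) mul1r.
under [RHS]eq_bigr do rewrite mulrDl.
rewrite big_split /= big_ord_recl big_ord_recr /= /bump ?add1n.
have e1 : \sum_(i < n) G (1 + i)%N = \sum_(i < n) G i.+1 / 2 + \sum_(i < n) G i.+1 / 2.
  by rewrite -big_split; apply: eq_bigr => i _; rewrite add1n; exact: splitr.
have e2 : \sum_(i < n) G ((0 <= i) + i)%N / 2 = \sum_(i < n) G i.+1 / 2.
  by apply: eq_bigr.
rewrite e1 e2 mulrC [2^-1 * _]mulrC; ring.
Qed.
Lemma Itil_sum n (g : nat -> nat -> R) : (0 < n)%N ->
  \sum_(x < n.+1) \sum_(x' < n.+1) Itil R n.+1 x x' * g x x' =
  \sum_(i < n) (g i i + g i.+1 i.+1) / 2.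
Proof.
move=> hn.
under eq_bigr => x _ do under eq_bigr => y _ do rewrite !mxE.
under eq_bigr => x _ do rewrite (sum_delta2 _ x _ (fun y : 'I_n.+1 => g x y)).
exact: (trap _ (fun k => g k k)).
Qed.

Definition asm n (M : 'M[R]_n.+1) (L : 'M[R]_2) :=
  forall g : 'I_n.+1 -> 'I_n.+1 -> R,
  \sum_x \sum_x' M x x' * g x x' =
  \sum_(i < n) \sum_a \sum_a' L a a' * g (shift_ord i a) (shift_ord i a').

Arguments asm {n}.

Lemma shift_inord n (i : 'I_n) (a : 'I_2) : shift_ord i a = inord (i + a).
Proof. by apply: val_inj; rewrite /= inordK // shift_ord_proof. Qed.

Lemma asm_WtW n : asm (WtW n) (WtW 1).
Proof.
move=> g; pose g2 := fun a b : nat => g (inord a) (inord b).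
transitivity (\sum_(x < n.+1) \sum_(x' < n.+1) WtW n x x' * g2 x x').
  by apply: eq_bigr => x _; apply: eq_bigr => y _; rewrite /g2 !inord_val.
rewrite WtW_sum; apply: eq_bigr => i _.
transitivity (\sum_(a < 2) \sum_(a' < 2) WtW 1 a a' * (fun a b : nat => g2 (i + a)%N (i + b)%N) a a').
  by rewrite (WtW_sum 1 (fun a b : nat => g2 (i + a)%N (i + b)%N)) big_ord1 /= addn0 addn1.
by apply: eq_bigr => a _; apply: eq_bigr => b _; rewrite !shift_inord.
Qed.

Lemma asm_Itil n : (0 < n)%N -> asm (Itil R n.+1) (Itil R 2).
Proof.
move=> hn g; pose g2 := fun a b : nat => g (inord a) (inord b).
transitivity (\sum_(x < n.+1) \sum_(x' < n.+1) Itil R n.+1 x x' * g2 x x').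
  by apply: eq_bigr => x _; apply: eq_bigr => y _; rewrite /g2 !inord_val.
rewrite Itil_sum //; apply: eq_bigr => i _.
transitivity (\sum_(a < 2) \sum_(a' < 2) Itil R 2 a a' * (fun a b : nat => g2 (i + a)%N (i + b)%N) a a').
  by rewrite (Itil_sum 1 (fun a b : nat => g2 (i + a)%N (i + b)%N)) // big_ord1 /= addn0 addn1.
by apply: eq_bigr => a _; apply: eq_bigr => b _; rewrite !shift_inord.
Qed.
Lemma pull (I : finType) n (M : 'M[R]_n) (H : I -> 'I_n -> 'I_n -> R) :
  \sum_y \sum_y' M y y' * (\sum_p H p y y') = \sum_p \sum_y \sum_y' M y y' * H p y y'.
Proof.
under eq_bigr do under eq_bigr do rewrite mulr_sumr.
under eq_bigr do rewrite exchange_big.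
by rewrite exchange_big.
Qed.

Lemma N3_asm nx ny nz (A : 'M[R]_nz.+1) (B : 'M[R]_ny.+1) (C : 'M[R]_nx.+1)
  (Al Bl Cl : 'M[R]_2) F :
  asm A Al -> asm B Bl -> asm C Cl ->
  N3 A B C F = \sum_(i < nx) \sum_(j < ny) \sum_(k < nz)
    N3 Al Bl Cl (fun a a' b b' c c' => F (shift_ord i a) (shift_ord i a')
        (shift_ord j b) (shift_ord j b') (shift_ord k c) (shift_ord k c')).
Proof.
move=> hA hB hC; rewrite /N3.
under eq_bigr => z _ do under eq_bigr => z' _ do under eq_bigr => y _ do
  under eq_bigr => y' _ do rewrite (hC (fun x x' => F x x' y y' z z')).
under eq_bigr => z _ do under eq_bigr => z' _ do rewrite pull.
under eq_bigr => z _ do under eq_bigr => z' _ do under eq_bigr => p _ do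
  rewrite (hB (fun y y' => \sum_a \sum_a' Cl a a' * F (shift_ord p a) (shift_ord p a') y y' z z')).
rewrite pull; apply: eq_bigr => i _.
rewrite pull; apply: eq_bigr => j _.
rewrite (hA (fun z z' => \sum_b \sum_b' Bl b b' * (\sum_a \sum_a' Cl a a' *
   F (shift_ord i a) (shift_ord i a') (shift_ord j b) (shift_ord j b') z z'))).
by [].
Qed.
Definition S3 {nx ny nz} (F : 'I_nx -> 'I_ny -> 'I_nz -> R) : R :=
  \sum_(i < nx) \sum_(j < ny) \sum_(k < nz) F i j k.

Lemma S3D nx ny nz (F G : 'I_nx -> 'I_ny -> 'I_nz -> R) :
  S3 (fun i j k => F i j k + G i j k) = S3 F + S3 G.
Proof.
rewrite /S3 -big_split; apply: eq_bigr => i _.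
rewrite -big_split; apply: eq_bigr => j _; by rewrite -big_split.
Qed.
Lemma S3B nx ny nz (F G : 'I_nx -> 'I_ny -> 'I_nz -> R) :
  S3 (fun i j k => F i j k - G i j k) = S3 F - S3 G.
Proof.
rewrite /S3 -sumrB; apply: eq_bigr => i _.
rewrite -sumrB; apply: eq_bigr => j _; by rewrite -sumrB.
Qed.
Lemma S3Z nx ny nz c (F : 'I_nx -> 'I_ny -> 'I_nz -> R) :
  S3 (fun i j k => c * F i j k) = c * S3 F.
Proof.
rewrite /S3 mulr_sumr; apply: eq_bigr => i _.
rewrite mulr_sumr; apply: eq_bigr => j _; by rewrite mulr_sumr.
Qed.

Lemma node_xK nx ny nz (x : 'I_nx.+1) (y : 'I_ny.+1) (z : 'I_nz.+1) : node_x (node x y z) = x.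
Proof. by rewrite /node_x /node !mxtens_indexK. Qed.
Lemma node_yK nx ny nz (x : 'I_nx.+1) (y : 'I_ny.+1) (z : 'I_nz.+1) : node_y (node x y z) = y.
Proof. by rewrite /node_y /node !mxtens_indexK. Qed.
Lemma node_zK nx ny nz (x : 'I_nx.+1) (y : 'I_ny.+1) (z : 'I_nz.+1) : node_z (node x y z) = z.
Proof. by rewrite /node_z /node !mxtens_indexK. Qed.

Definition loc {nx ny nz} (i : 'I_nx) (j : 'I_ny) (k : 'I_nz) (v : 'cV[R]_(Nn nx ny nz))
  : 'cV[R]_(Nn 1 1 1) :=
  \col_(q < Nn 1 1 1)
      v (node (shift_ord i (node_x q)) (shift_ord j (node_y q))
              (shift_ord k (node_z q))) 0.

Lemma psi_cellE nx ny nz (a b : 'cV[R]_(Nn nx ny nz)) i j k :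
  psi_cell a b i j k = col_mx (loc i j k a) (loc i j k b).
Proof. by []. Qed.

Lemma loc_node nx ny nz (i : 'I_nx) (j : 'I_ny) (k : 'I_nz) v a b c :
  loc i j k v (node a b c) 0 = v (node (shift_ord i a) (shift_ord j b) (shift_ord k c)) 0.
Proof. by rewrite mxE node_xK node_yK node_zK. Qed.

Lemma N3_ext a b c (A : 'M[R]_c) (B : 'M[R]_b) (C : 'M[R]_a) F G :
  (forall x x' y y' z z', F x x' y y' z z' = G x x' y y' z z') -> N3 A B C F = N3 A B C G.
Proof.
move=> e; rewrite /N3; apply: eq_bigr => z _; apply: eq_bigr => z' _; congr (_ * _).
apply: eq_bigr => y _; apply: eq_bigr => y' _; congr (_ * _).
apply: eq_bigr => x _; apply: eq_bigr => x' _; by rewrite e.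
Qed.

Lemma asm_form nx ny nz (A : 'M[R]_nz.+1) (B : 'M[R]_ny.+1) (C : 'M[R]_nx.+1)
  (Al Bl Cl : 'M[R]_2) (f g : 'cV[R]_(Nn nx ny nz)) :
  asm A Al -> asm B Bl -> asm C Cl ->
  form (A *t (B *t C)) f g =
  S3 (fun i j k => form (Al *t (Bl *t Cl)) (loc i j k f) (loc i j k g)).
Proof.
move=> hA hB hC; rewrite tens_form (@N3_asm _ _ _ _ _ _ _ _ _ _ hA hB hC) /S3.
apply: eq_bigr => i _; apply: eq_bigr => j _; apply: eq_bigr => k _.
rewrite tens_form; apply: N3_ext => *; by rewrite !loc_node.
Qed.

Lemma loc_DU nx ny nz (U : 'I_nx.+1 -> 'I_ny.+1 -> 'I_nz.+1 -> R) i j k v :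
  loc i j k (DU U *m v) = DU (U_cell U i j k) *m loc i j k v.
Proof.
apply/matrixP => q c; rewrite /DU !mul_diag_mx !mxE node_xK node_yK node_zK.
by [].
Qed.
Lemma S3N nx ny nz (F : 'I_nx -> 'I_ny -> 'I_nz -> R) :
  S3 (fun i j k => - F i j k) = - S3 F.
Proof.
rewrite /S3 -sumrN; apply: eq_bigr => i _.
rewrite -sumrN; apply: eq_bigr => j _; by rewrite -sumrN.
Qed.
Lemma S3_ext nx ny nz (F G : 'I_nx -> 'I_ny -> 'I_nz -> R) :
  (forall i j k, F i j k = G i j k) -> S3 F = S3 G.
Proof.
move=> e; rewrite /S3; apply: eq_bigr => i _; apply: eq_bigr => j _; apply: eq_bigr => k _.
exact: e.
Qed.

Lemma asm_form_DU nx ny nz (A : 'M[R]_nz.+1) (B : 'M[R]_ny.+1) (C : 'M[R]_nx.+1)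
  (Al Bl Cl : 'M[R]_2) (U : 'I_nx.+1 -> 'I_ny.+1 -> 'I_nz.+1 -> R) (f g : 'cV[R]_(Nn nx ny nz)) :
  asm A Al -> asm B Bl -> asm C Cl ->
  form (A *t (B *t C)) f (DU U *m g) =
  S3 (fun i j k => form (Al *t (Bl *t Cl)) (loc i j k f) (DU (U_cell U i j k) *m loc i j k g)).
Proof.
move=> hA hB hC; rewrite (asm_form _ _ _ _ _ _ _ _ _ _ _ hA hB hC).
by apply: S3_ext => i j k; rewrite loc_DU.
Qed.

Lemma main_form hbar m dx dy dz dt nx ny nz (U : 'I_nx.+1 -> 'I_ny.+1 -> 'I_nz.+1 -> R)
  (a b : 'cV[R]_(Nn nx ny nz)) :
  dx != 0 -> dy != 0 -> dz != 0 -> (0 < nx)%N -> (0 < ny)%N -> (0 < nz)%N ->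
  form (Pm hbar m dx dy dz dt U) (col_mx a b) (col_mx a b) =
  S3 (fun i j k => form (Pm hbar m dx dy dz dt (U_cell U i j k))
                        (psi_cell a b i j k) (psi_cell a b i j k)).
Proof.
move=> hx hy hz hnx hny hnz.
have tx := asm_Itil _ hnx; have ty := asm_Itil _ hny; have tz := asm_Itil _ hnz.
have wx := asm_WtW nx; have wy := asm_WtW ny; have wz := asm_WtW nz.
under S3_ext => i j k do rewrite psi_cellE Pm_form !H_form // /DV !formZ.
rewrite Pm_form !H_form // /DV !formZ.
rewrite !(asm_form_DU _ _ _ _ _ _ _ _ _ _ _ _ tz ty tx).
rewrite !(asm_form _ _ _ _ _ _ _ _ _ _ _ tz ty wx) !(asm_form _ _ _ _ _ _ _ _ _ _ _ tz wy tx).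
rewrite !(asm_form _ _ _ _ _ _ _ _ _ _ _ wz ty tx) !(asm_form _ _ _ _ _ _ _ _ _ _ _ tz ty tx).
by rewrite !(S3D, S3N, S3Z).
Qed.
End P2.

Theorem lemma4 (R : realFieldType) (hbar m dx dy dz dt : R) (nx ny nz : nat)
  (Hhbar : 0 < hbar) (Hm : 0 < m) (Hdx : 0 < dx) (Hdy : 0 < dy) (Hdz : 0 < dz)
  (Hdt : 0 < dt) (Hnx : (0 < nx)%N) (Hny : (0 < ny)%N) (Hnz : (0 < nz)%N)
  (U : 'I_nx.+1 -> 'I_ny.+1 -> 'I_nz.+1 -> R)
  (psiR psiI : 'cV[R]_(Nn nx ny nz)) :
  (col_mx psiR psiI)^T *m Pm hbar m dx dy dz dt U *m col_mx psiR psiI =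
  \sum_(i < nx) \sum_(j < ny) \sum_(k < nz)
     ((psi_cell psiR psiI i j k)^T
        *m Pm hbar m dx dy dz dt (U_cell U i j k)
        *m psi_cell psiR psiI i j k).
Proof.
apply/matrixP => p q; rewrite [p]ord1 [q]ord1.
rewrite summxE; under eq_bigr do rewrite summxE.
under eq_bigr do under eq_bigr do rewrite summxE.
exact: (@main_form R hbar m dx dy dz dt _ _ _ U psiR psiI (lt0r_neq0 Hdx) (lt0r_neq0 Hdy)
          (lt0r_neq0 Hdz) Hnx Hny Hnz).
Qed.
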